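(* Let $\mathcal{C}$ be a class of finite digraphs for which there is a natural number $N$ such that every disjoint edge set in every member of $\mathcal{C}$ has size at most $N$. Then $\mathcal{C}$ is well quasi-ordered under both the standard and the strong homomorphic image orderings.
   Context: A digraph is a set $D$ with a binary relation $E(D)\subseteq D\times D$ (edges; loops allowed). Edges $(a_1,b_1),\dots,(a_k,b_k)$ form a disjoint edge set if the vertices $a_1,\dots,a_k,b_1,\dots,b_k$ are all distinct. A homomorphism $\phi:D_1\to D_2$ maps edges to edges; it is strong if additionally every edge of $D_2$ between vertices of $\phi(D_1)$ is the image of an edge of $D_1$. Epimorphism = surjective homomorphism. Standard homomorphic image ordering: $A\preceq B$ iff there is an epimorphism $B\to A$; strong homomorphic image ordering: $A\preceq B$ iff there is a strong epimorphism $B\to A$. Well quasi-ordered means no infinite strictly decreasing sequence and no infinite antichain; structures considered up to isomorphism. *)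

(* Defs.v *)
From mathcomp Require Import all_boot.
Set Implicit Arguments. Unset Strict Implicit. Unset Printing Implicit Defensive.

(* A finite digraph, represented (up to isomorphism) on the vertex set
   'I_n = {0,...,n-1}; loops allowed. *)
Record digraph := Digraph { dsize : nat; dedge : rel 'I_dsize }.

Definition vert (D : digraph) := 'I_(dsize D).

Definition is_hom (D1 D2 : digraph) (phi : vert D1 -> vert D2) : Prop :=
  forall a b, dedge a b -> dedge (phi a) (phi b).

Definition is_strong_hom (D1 D2 : digraph) (phi : vert D1 -> vert D2) : Prop :=
  is_hom phi /\
  forall (x y : vert D2),
    (exists a, phi a = x) -> (exists b, phi b = y) -> dedge x y ->
    exists a b, [/\ phi a = x, phi b = y & dedge a b].

Definition surj (A B : Type) (f : A -> B) : Prop := forall y, exists x, f x = y.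

Definition hom_image_le (A B : digraph) : Prop :=
  exists phi : vert B -> vert A, is_hom phi /\ surj phi.

Definition strong_hom_image_le (A B : digraph) : Prop :=
  exists phi : vert B -> vert A, is_strong_hom phi /\ surj phi.

Definition disjoint_edge_set (D : digraph) (s : seq (vert D * vert D)) : Prop :=
  all (fun e => dedge e.1 e.2) s /\ uniq (map fst s ++ map snd s).

Definition wqo_on (C : digraph -> Prop) (le : digraph -> digraph -> Prop) : Prop :=
  (~ exists f : nat -> digraph,
       (forall i, C (f i)) /\
       (forall i, le (f i.+1) (f i) /\ ~ le (f i) (f i.+1)))
  /\
  (~ exists f : nat -> digraph,
       (forall i, C (f i)) /\
       (forall i j, i <> j -> ~ le (f i) (f j))).

(* Main.v *)
Require Import Defs.
From mathcomp Require Import all_boot.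
From mathcomp Require Import zify.
From Stdlib Require Import Classical ClassicalEpsilon.
Set Implicit Arguments. Unset Strict Implicit. Unset Printing Implicit Defensive.

Definition ramsey (A : Type) (R : A -> A -> Prop) :=
  forall f : nat -> A, exists g : nat -> nat,
    (forall i, g i < g i.+1) /\ (forall i, R (f (g i)) (f (g i.+1))).

Lemma incr_le (g : nat -> nat) : (forall i, g i < g i.+1) ->
  forall i j, i <= j -> g i <= g j.
Proof.
move=> Hg i j /subnKC <-. elim: (j - i) => [|k IH]; first by rewrite addn0.
rewrite addnS. exact: leq_trans IH (ltnW (Hg _)).
Qed.

Lemma incr_lt (g : nat -> nat) : (forall i, g i < g i.+1) ->
  forall i j, i < j -> g i < g j.
Proof. move=> Hg i j ij; exact: leq_trans (Hg i) (incr_le Hg ij). Qed.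

Lemma chain (A : Type) (R : A -> A -> Prop) (h : nat -> A) :
  (forall a, R a a) -> (forall a b c, R a b -> R b c -> R a c) ->
  (forall i, R (h i) (h i.+1)) -> forall i j, i <= j -> R (h i) (h j).
Proof.
move=> Rr Rt H i j /subnKC <-. elim: (j - i) => [|k IH]; first by rewrite addn0.
rewrite addnS. exact: Rt IH (H _).
Qed.

Lemma extract (P : nat -> Prop) : (forall n, exists j, n <= j /\ P j) ->
  exists g : nat -> nat, (forall i, g i < g i.+1) /\ (forall i, P (g i)).
Proof.
move=> H.
pose h n := proj1_sig (constructive_indefinite_description _ (H n)).
have hP n : n <= h n /\ P (h n).
  by rewrite /h; case: constructive_indefinite_description.
pose g := fix g i := if i is i'.+1 then h (g i').+1 else h 0.
exists g; split.
  move=> i /=; exact: (hP _).1.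
by case=> [|i] /=; exact: (hP _).2.
Qed.

Lemma least_elem (P : nat -> Prop) : (exists v, P v) ->
  exists v, P v /\ forall w, P w -> v <= w.
Proof.
case=> v Pv. elim/ltn_ind: v Pv => v IH Pv.
case: (classic (exists w, P w /\ w < v)) => [[w [Pw lt]]|nw].
  exact: IH lt Pw.
exists v; split => // w Pw. rewrite leqNgt; apply/negP => lt; apply: nw; by exists w.
Qed.

Lemma ramsey_leq : ramsey (fun a b : nat => a <= b).
Proof.
move=> f.
have H n : exists j, n <= j /\ forall k, j <= k -> f j <= f k.
  have [v [[j [nj <-]] Hv]] := least_elem (P := fun v => exists j, n <= j /\ f j = v)
     (ex_intro _ (f n) (ex_intro _ n (conj (leqnn n) erefl))).
  exists j; split => // k jk; apply: Hv; exists k; split => //; exact: leq_trans nj jk.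
have [g [Hg HP]] := extract H.
exists g; split => // i; apply: HP; exact: ltnW.
Qed.

Definition R0 (a b : nat) := a <= b /\ (a == 0) = (b == 0).

Lemma ramsey_R0 : ramsey R0.
Proof.
move=> f. have [g [Hg Hm]] := ramsey_leq f.
have Hc := chain (R := fun a b : nat => a <= b) (h := fun i => f (g i)) leqnn
   (fun a b c h1 h2 => leq_trans h1 h2) Hm.
case: (classic (exists k, 0 < f (g k))) => [[k Hk]|nk].
  have pos j : k <= j -> 0 < f (g j) by move=> kj; exact: leq_trans Hk (Hc _ _ kj).
  exists (fun i => g (k + i)); split => [i|i]; first by rewrite addnS.
  rewrite addnS; split; first exact: Hm.
  by rewrite !eqn0Ngt pos ?leq_addr // pos // leqW // leq_addr.
have z k : f (g k) = 0.
  by case: (posnP (f (g k))) => // hk; exfalso; apply: nk; exists k.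
by exists g; split => // i; rewrite /R0 !z.
Qed.

Lemma ramsey_list (T : eqType) (ts : seq T) :
  ramsey (fun u v : T -> nat => forall t, t \in ts -> R0 (u t) (v t)).
Proof.
elim: ts => [|t ts IH] f.
  by exists id; split.
have [g1 [Hg1 H1]] := IH f.
have [g2 [Hg2 H2]] := ramsey_R0 (fun i => f (g1 i) t).
have Hc := chain (R := fun u v : T -> nat => forall t, t \in ts -> R0 (u t) (v t))
   (h := fun i => f (g1 i)) (fun a y _ => conj (leqnn _) erefl)
   (fun a b c Hab Hbc y yin => match Hab y yin, Hbc y yin with
      conj l1 e1, conj l2 e2 => conj (leq_trans l1 l2) (etrans e1 e2) end) H1.
exists (fun i => g1 (g2 i)); split.
  move=> i; exact: incr_lt Hg1 _ _ (Hg2 i).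
move=> i x; rewrite in_cons => /orP [/eqP -> | xin]; first exact: H2.
exact: (Hc _ _ (ltnW (Hg2 i))).
Qed.
Definition iscover (K : nat) (D : digraph) (s : seq 'I_(dsize D)) : bool :=
  [&& uniq s, size s <= K &
   [forall x : 'I_(dsize D), forall y : 'I_(dsize D),
      dedge x y ==> [|| x == y, x \in s | y \in s]]].
Arguments iscover K D s : clear implicits.

Lemma cover_exists (D : digraph) N :
  (forall s : seq (vert D * vert D), disjoint_edge_set s -> size s <= N) ->
  exists s, iscover N.*2 D s.
Proof.
move=> HN.
have main : forall m (s0 : seq (vert D * vert D)), disjoint_edge_set s0 ->
    N < size s0 + m -> exists s, iscover N.*2 D s.
  elim => [|m IH] s0 Hd Hlt.
    by rewrite addn0 ltnNge HN in Hlt.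
  pose ends := map fst s0 ++ map snd s0.
  case Hc: [forall x : 'I_(dsize D), forall y : 'I_(dsize D),
      dedge x y ==> [|| x == y, x \in ends | y \in ends]].
    exists ends; apply/and3P; split => //; first by case: Hd.
    by rewrite size_cat !size_map addnn leq_double; exact: HN.
  move/negbT: Hc => /forallPn [x /forallPn [y]].
  rewrite negb_imply => /andP [exy]; rewrite !negb_or => /and3P [nxy xe ye].
  apply: (IH ((x, y) :: s0)); last by rewrite /= addSnnS.
  case: Hd => Ha Hu; split; first by rewrite /= exy.
  move: xe ye Hu; rewrite /ends !mem_cat => /norP[xA xB] /norP[yA yB] Hu.
  rewrite /=; rewrite uniq_catC /= uniq_catC Hu.
  by rewrite !mem_cat !in_cons !negb_or (negbTE xA) (negbTE xB) (negbTE yA) (negbTE yB) nxy.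
apply: (main N.+1 [::]) => //.
Qed.
Notation typ K := (option 'I_K * bool * {ffun 'I_K -> bool} * {ffun 'I_K -> bool})%type.

Definition vtype (K : nat) (D : digraph) (s : seq 'I_(dsize D)) (v : 'I_(dsize D)) : typ K :=
  (if v \in s then insub (index v s) else None, dedge v v,
   [ffun l : 'I_K => (l < size s) && dedge (nth v s l) v],
   [ffun l : 'I_K => (l < size s) && dedge v (nth v s l)]).
Arguments vtype K D s v : clear implicits.

Definition cnt (K : nat) (D : digraph) (s : seq 'I_(dsize D)) (t : typ K) :=
  #|[set v | vtype K D s v == t]|.
Arguments cnt K D s t : clear implicits.

Lemma vtype1 K D s v (l : 'I_K) :
  (vtype K D s v).1.1.1 = Some l <-> v \in s /\ index v s = l.
Proof.
rewrite /vtype /=. case: ifP => vs; last by split => [//|[vs2 _]]; rewrite vs2 in vs.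
case: insubP => [u _ uv|nl].
  split => [[<-]|[_ ie]]; first by split.
  by congr Some; apply: val_inj; rewrite /= uv ie.
by split => // [[_ ie]]; rewrite ie ltn_ord in nl.
Qed.

Lemma vtype_in K D s v w (hv : v \in s) (hl : index v s < K) :
  (vtype K D s w).1.2 (Ordinal hl) = dedge v w.
Proof. by rewrite /vtype ffunE /= index_mem hv /= nth_index. Qed.

Lemma vtype_out K D s v w (hv : v \in s) (hl : index v s < K) :
  (vtype K D s w).2 (Ordinal hl) = dedge w v.
Proof. by rewrite /vtype ffunE /= index_mem hv /= nth_index. Qed.
Lemma main_le K (A B : digraph) (sA : seq 'I_(dsize A)) (sB : seq 'I_(dsize B)) :
  iscover K A sA -> iscover K B sB ->
  (forall t, R0 (cnt K A sA t) (cnt K B sB t)) -> strong_hom_image_le A B.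
Proof.
move=> cA cB Hc.
have [_ szA /forallP covA'] := and3P cA.
have [_ szB /forallP covB'] := and3P cB.
have covA x y : dedge x y -> [|| x == y, x \in sA | y \in sA].
  by move: (covA' x) => /forallP /(_ y) /implyP.
have covB x y : dedge x y -> [|| x == y, x \in sB | y \in sB].
  by move: (covB' x) => /forallP /(_ y) /implyP.
have posA t : 0 < cnt K B sB t -> 0 < cnt K A sA t.
  by rewrite !lt0n (Hc t).2.
have posB v : 0 < cnt K B sB (vtype K B sB v).
  by rewrite /cnt card_gt0; apply/set0Pn; exists v; rewrite inE.
case: (pickP (fun _ : 'I_(dsize A) => true)) => [a0 _|none]; last first.
  have hB : 'I_(dsize B) -> False.
    move=> b; move: (posA _ (posB b)); rewrite /cnt card_gt0 => /set0Pn [a _].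
    by have := none a.
  exists (fun b => match hB b with end); split; [split|].
  - by move=> a; case: (hB a).
  - by move=> x y [a _]; case: (hB a).
  - by move=> y; have := none y.
pose LA t := enum [set v | vtype K A sA v == t].
pose LB t := enum [set v | vtype K B sB v == t].
have sizeLA t : size (LA t) = cnt K A sA t by rewrite /LA -cardE.
have sizeLB t : size (LB t) = cnt K B sB t by rewrite /LB -cardE.
have memLA t x : (x \in LA t) = (vtype K A sA x == t) by rewrite mem_enum inE.
have memLB t x : (x \in LB t) = (vtype K B sB x == t) by rewrite mem_enum inE.
pose phi (v : 'I_(dsize B)) := nth a0 (LA (vtype K B sB v))
   (minn (index v (LB (vtype K B sB v))) (cnt K A sA (vtype K B sB v)).-1).
have Htype v : vtype K A sA (phi v) = vtype K B sB v.
  apply/eqP; rewrite -memLA; apply: mem_nth; rewrite sizeLA.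
  apply: leq_ltn_trans (geq_minr _ _) _; rewrite ltn_predL; exact: posA.
have loop x : (vtype K A sA (phi x)).1.1.2 = dedge x x by rewrite Htype.
exists phi; split; [split|].
- move=> v w e; case/or3P: (covB v w e) => [/eqP vw | vs | ws].
  + by subst w; move: (loop v) => /= ->.
  + have hl : index v sB < K by apply: leq_trans szB; rewrite index_mem.
    have h1 : (vtype K B sB v).1.1.1 = Some (Ordinal hl) by apply/vtype1.
    rewrite -(Htype v) in h1; case/vtype1: h1 => pvs /= pidx.
    have hl' : index (phi v) sA < K by rewrite pidx.
    rewrite -(vtype_in (phi w) pvs hl').
    have -> : Ordinal hl' = Ordinal hl by apply: val_inj; rewrite /= pidx.
    by rewrite Htype vtype_in.
  + have hl : index w sB < K by apply: leq_trans szB; rewrite index_mem.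
    have h1 : (vtype K B sB w).1.1.1 = Some (Ordinal hl) by apply/vtype1.
    rewrite -(Htype w) in h1; case/vtype1: h1 => pws /= pidx.
    have hl' : index (phi w) sA < K by rewrite pidx.
    rewrite -(vtype_out (phi v) pws hl').
    have -> : Ordinal hl' = Ordinal hl by apply: val_inj; rewrite /= pidx.
    by rewrite Htype vtype_out.
- move=> x y [a <-] [b <-] e; case/or3P: (covA _ _ e) => [/eqP ab | pa | pb].
  + exists a, a; split => //; rewrite -loop ab.
    by move: e; rewrite ab /=.
  + have hl : index (phi a) sA < K by apply: leq_trans szA; rewrite index_mem.
    have h1 : (vtype K A sA (phi a)).1.1.1 = Some (Ordinal hl) by apply/vtype1.
    rewrite Htype in h1; case/vtype1: h1 => pas /= pidx.
    have hl' : index a sB < K by rewrite pidx.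
    exists a, b; split => //.
    rewrite -(vtype_in b pas hl') -(Htype b).
    have -> : Ordinal hl' = Ordinal hl by apply: val_inj; rewrite /= pidx.
    by rewrite vtype_in.
  + have hl : index (phi b) sA < K by apply: leq_trans szA; rewrite index_mem.
    have h1 : (vtype K A sA (phi b)).1.1.1 = Some (Ordinal hl) by apply/vtype1.
    rewrite Htype in h1; case/vtype1: h1 => pbs /= pidx.
    have hl' : index b sB < K by rewrite pidx.
    exists a, b; split => //.
    rewrite -(vtype_out a pbs hl') -(Htype a).
    have -> : Ordinal hl' = Ordinal hl by apply: val_inj; rewrite /= pidx.
    by rewrite vtype_out.
- move=> x.
  pose t := vtype K A sA x.
  have xin : x \in LA t by rewrite memLA.
  pose r := index x (LA t).
  have rA : r < cnt K A sA t by rewrite -sizeLA index_mem.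
  have rB : r < size (LB t) by rewrite sizeLB; exact: leq_trans rA (Hc t).1.
  have b0 : 'I_(dsize B) by case: (LB t) rB => [|b0 l].
  exists (nth b0 (LB t) r).
  have vin : nth b0 (LB t) r \in LB t := mem_nth b0 rB.
  have vt : vtype K B sB (nth b0 (LB t) r) = t by apply/eqP; rewrite -memLB.
  have idx : index (nth b0 (LB t) r) (LB t) = r by rewrite index_uniq // enum_uniq.
  rewrite /phi vt idx.
  have -> : minn r (cnt K A sA t).-1 = r by apply/minn_idPl; lia.
  by rewrite nth_index.
Qed.
Definition ecount (D : digraph) :=
  #|[set p : 'I_(dsize D) * 'I_(dsize D) | dedge p.1 p.2]|.
Definition mu (D : digraph) :=
  dsize D * dsize D * dsize D + (dsize D * dsize D - ecount D).

Lemma ecount_le D : ecount D <= dsize D * dsize D.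
Proof. by rewrite /ecount; apply: leq_trans (max_card _) _; rewrite card_prod card_ord. Qed.

Lemma surj_facts (A B : digraph) (phi : 'I_(dsize B) -> 'I_(dsize A)) :
  surj phi -> dsize A <= dsize B /\ (dsize A = dsize B -> injective phi).
Proof.
move=> Hs.
have E : phi @: [set: 'I_(dsize B)] = [set: 'I_(dsize A)].
  apply/eqP; rewrite eqEsubset subsetT /=; apply/subsetP => y _.
  by have [x <-] := Hs y; apply: imset_f; rewrite inE.
split.
  by have := leq_imset_card phi [set: 'I_(dsize B)]; rewrite E !cardsT !card_ord.
move=> ab.
have /imset_injP inj : #|phi @: [set: 'I_(dsize B)]| == #|[set: 'I_(dsize B)]|.
  by rewrite E !cardsT !card_ord ab.
by move=> x y; apply: inj; rewrite inE.
Qed.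

Lemma edge_inj (A B : digraph) (phi : 'I_(dsize B) -> 'I_(dsize A)) :
  is_hom phi -> injective phi ->
  let F := fun p : 'I_(dsize B) * 'I_(dsize B) => (phi p.1, phi p.2) in
  F @: [set p | dedge p.1 p.2] \subset [set p | dedge p.1 p.2] /\
  #|F @: [set p : 'I_(dsize B) * 'I_(dsize B) | dedge p.1 p.2]| = ecount B.
Proof.
move=> Hh inj F; split.
  apply/subsetP => q /imsetP [p]; rewrite !inE => e ->; exact: Hh.
rewrite card_imset //; move=> [a b] [c d] [] /inj -> /inj -> //.
Qed.

Lemma mu_le (A B : digraph) : hom_image_le A B ->
  mu A <= mu B /\ (mu A = mu B -> strong_hom_image_le B A).
Proof.
case=> phi [Hh Hs].
have [ab inj] := surj_facts Hs.
have eA := ecount_le A; have eB := ecount_le B.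
have [lt|ge] := ltnP (dsize A) (dsize B).
  have h3 : (dsize A).+1 * (dsize A).+1 * (dsize A).+1 <= dsize B * dsize B * dsize B.
    by apply: leq_mul; [apply: leq_mul|].
  have : mu A < mu B by rewrite /mu; nia.
  by move=> h; split; [exact: ltnW| move=> E; rewrite E ltnn in h].
have eq : dsize A = dsize B by apply/anti_leq; rewrite ab ge.
have inj' := inj eq.
have [sub cardF] := edge_inj Hh inj'.
have le : ecount B <= ecount A by rewrite -cardF; exact: subset_leq_card sub.
split; first by rewrite /mu eq; lia.
move=> E.
have eAB : ecount A = ecount B by move: E; rewrite /mu eq; lia.
pose F := fun p : 'I_(dsize B) * 'I_(dsize B) => (phi p.1, phi p.2).
rewrite -/F in sub cardF.
have Eimg : F @: [set p | dedge p.1 p.2] = [set p | dedge p.1 p.2].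
  by apply/eqP; rewrite eqEcard sub /= cardF -eAB.
have ex a : exists x, phi x == a by have [x <-] := Hs a; exists x.
pose psi a := xchoose (ex a).
have psiK a : phi (psi a) = a by apply/eqP; exact: (xchooseP (ex a)).
have phiK x : psi (phi x) = x by apply: inj'; rewrite psiK.
exists psi; split; [split|].
- move=> x y e.
  have : (x, y) \in F @: [set p | dedge p.1 p.2] by rewrite Eimg inE.
  case/imsetP => [[a b]]; rewrite inE /= => ab' [-> ->].
  by rewrite !phiK.
- move=> x y _ _ e; exists (phi x), (phi y); split; rewrite ?phiK //; exact: Hh.
- by move=> y; exists (phi y); exact: phiK.
Qed.
Lemma strong_hom A B : strong_hom_image_le A B -> hom_image_le A B.
Proof. by case=> phi [[h _] s]; exists phi. Qed.

Lemma no_desc (C : digraph -> Prop) (le : digraph -> digraph -> Prop) :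
  (forall A B, le A B -> hom_image_le A B) ->
  (forall A B, strong_hom_image_le A B -> le A B) ->
  ~ exists f : nat -> digraph,
       (forall i, C (f i)) /\
       (forall i, le (f i.+1) (f i) /\ ~ le (f i) (f i.+1)).
Proof.
move=> Hh Hs [f [_ H]].
have dec i : mu (f i.+1) < mu (f i).
  have [h1 h2] := H i.
  have [hl he] := mu_le (Hh _ _ h1).
  rewrite ltn_neqAle hl andbT; apply/eqP => E; apply: h2; apply: Hs; exact: he.
have Hi : forall i, mu (f i) + i <= mu (f 0).
  elim => [|i IH]; first by rewrite addn0.
  have := dec i; lia.
have := Hi (mu (f 0)).+1; lia.
Qed.

Theorem corollary2p7 (C : digraph -> Prop) (N : nat) :
  (forall D, C D -> forall s : seq (vert D * vert D),
     disjoint_edge_set s -> size s <= N) ->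
  wqo_on C hom_image_le /\ wqo_on C strong_hom_image_le.
Proof.
move=> HN.
have anti : forall f : nat -> digraph, (forall i, C (f i)) ->
    exists i j, i <> j /\ strong_hom_image_le (f i) (f j).
  move=> f HC.
  have ex i : exists s, iscover N.*2 (f i) s := cover_exists (HN _ (HC i)).
  pose s i := xchoose (ex i).
  have sc i : iscover N.*2 (f i) (s i) := xchooseP (ex i).
  pose code i (t : typ N.*2) := cnt N.*2 (f i) (s i) t.
  have [g [Hg HR]] := ramsey_list (T := typ N.*2) (enum predT) code.
  exists (g 0), (g 1); split.
    by move=> E; have := Hg 0; rewrite E ltnn.
  apply: (main_le (sc _) (sc _)) => t; apply: HR; by rewrite mem_enum.
split; split.
- exact: (no_desc (le := hom_image_le)) strong_hom.
- case=> f [HC Ha]; have [i [j [ij H]]] := anti f HC.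
  exact: (Ha i j ij (strong_hom H)).
- exact: (no_desc (le := strong_hom_image_le) strong_hom (fun A B h => h)).
- case=> f [HC Ha]; have [i [j [ij H]]] := anti f HC.
  exact: (Ha i j ij H).
Qed.
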